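(* Let $k\ge 2$. Let $\theta$ be an antimorphic involution on $\Sigma^*$ and $\theta'$ an antimorphic involution on $\Sigma'^*$, for finite alphabets $\Sigma,\Sigma'$, such that $|\operatorname{Trn}(\theta')|\ge|\operatorname{Trn}(\theta)|$ and $|\operatorname{Idt}(\theta')|+|\operatorname{Trn}(\theta')|\ge|\operatorname{Idt}(\theta)|+|\operatorname{Trn}(\theta)|$. If there is an infinite word over $\Sigma$ that is pseudo-$k$th-power-free with respect to $\theta$, then there is an infinite word over $\Sigma'$ that is pseudo-$k$th-power-free with respect to $\theta'$.
   Context: Alphabets are totally ordered (letters $0,1,2,\dots$). A function $\theta:\Sigma^*\to\Sigma^*$ is an antimorphic involution if $\theta(uv)=\theta(v)\theta(u)$ and $\theta(\theta(w))=w$. $\operatorname{Idt}(\theta)=\{a\in\Sigma:\theta(a)=a\}$ and $\operatorname{Trn}(\theta)=\{a\in\Sigma:\theta(a)>a\}$. A nonempty word $w$ is a pseudo $k$th power with respect to $\theta$ if $w=u_1\cdots u_k$ where for all $1\le i,j\le k$, $u_i=u_j$ or $u_i=\theta(u_j)$; a word is pseudo-$k$th-power-free if no factor (contiguous subword) of it is a pseudo $k$th power. *)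

(* Defs.v *)
(* Alphabets are 'I_n = {0,...,n-1} with their natural total order. *)
From mathcomp Require Import all_boot.
Set Implicit Arguments. Unset Strict Implicit. Unset Printing Implicit Defensive.

Section Pseudo.
Variable T : eqType.

Definition antimorphic_involution (th : seq T -> seq T) : Prop :=
  (forall u v, th (u ++ v) = th v ++ th u) /\ (forall w, th (th w) = w).

Definition pseudo_power (th : seq T -> seq T) (k : nat) (w : seq T) : Prop :=
  w <> [::] /\
  exists us : seq (seq T),
    [/\ size us = k, flatten us = w &
        forall i j, i < k -> j < k ->
          nth [::] us i = nth [::] us j \/ nth [::] us i = th (nth [::] us j)].

Definition factor (x : nat -> T) (i len : nat) : seq T := mkseq (fun t => x (i + t)) len.

Definition inf_pseudo_power_free (th : seq T -> seq T) (k : nat) (x : nat -> T) : Prop :=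
  forall i len, ~ pseudo_power th k (factor x i len).
End Pseudo.

Definition Idt n (th : seq 'I_n -> seq 'I_n) : {set 'I_n} :=
  [set a | th [:: a] == [:: a]].
Definition Trn n (th : seq 'I_n -> seq 'I_n) : {set 'I_n} :=
  [set a | [exists b : 'I_n, (th [:: a] == [:: b]) && (a < b)]].

(* Main.v *)
Require Import Defs.
From mathcomp Require Import all_boot zify.
Set Implicit Arguments. Unset Strict Implicit. Unset Printing Implicit Defensive.

Section Constr.
Variables (n m : nat) (f : 'I_n -> 'I_n) (f' : 'I_m -> 'I_m).
Hypotheses (fK : involutive f) (f'K : involutive f').
Variables (a0 : 'I_n) (d : 'I_m).
Definition I := [set a : 'I_n | f a == a].
Definition T := [set a : 'I_n | a < f a].
Definition I' := [set c : 'I_m | f' c == c].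
Definition T' := [set c : 'I_m | c < f' c].
Hypotheses (hT : #|T| <= #|T'|) (hIT : #|I| + #|T| <= #|I'| + #|T'|).
Definition sI := enum I. Definition sT := enum T. Definition sI' := enum I'. Definition sT' := enum T'.

Definition g (a : 'I_n) : 'I_m :=
  if f a == a then nth d (sI' ++ drop #|T| sT') (index a sI)
  else if a < f a then nth d sT' (index a sT)
  else f' (nth d sT' (index (f a) sT)).

Definition h (c : 'I_m) : option 'I_n :=
  if f' c == c then (if index c sI' < #|I| then Some (nth a0 sI (index c sI')) else None)
  else if c < f' c then
    (if index c sT' < #|T| then Some (nth a0 sT (index c sT'))
     else if index c sT' - #|T| + #|I'| < #|I| then Some (nth a0 sI (index c sT' - #|T| + #|I'|))
     else None)
  else if index (f' c) sT' < #|T| then Some (f (nth a0 sT (index (f' c) sT'))) else None.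

Lemma szI : size sI = #|I|. Proof. by rewrite cardE. Qed.
Lemma szT : size sT = #|T|. Proof. by rewrite cardE. Qed.
Lemma szI' : size sI' = #|I'|. Proof. by rewrite cardE. Qed.
Lemma szT' : size sT' = #|T'|. Proof. by rewrite cardE. Qed.

Lemma memT' (c : 'I_m) : (c \in sT') = (c < f' c). Proof. by rewrite mem_enum inE. Qed.
Lemma memI' (c : 'I_m) : (c \in sI') = (f' c == c). Proof. by rewrite mem_enum inE. Qed.
Lemma memT (a : 'I_n) : (a \in sT) = (a < f a). Proof. by rewrite mem_enum inE. Qed.
Lemma memI (a : 'I_n) : (a \in sI) = (f a == a). Proof. by rewrite mem_enum inE. Qed.

Lemma up_ne (c : 'I_m) : c < f' c -> (f' c == c) = false.
Proof. by move=> lt; apply/negbTE; apply/eqP => E; rewrite E ltnn in lt. Qed.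

Lemma down1 (c : 'I_m) : c < f' c -> (f' (f' c) == f' c) = false.
Proof. by move=> lt; rewrite f'K; apply/negbTE; apply/eqP => E; rewrite -E ltnn in lt. Qed.
Lemma down2 (c : 'I_m) : c < f' c -> (f' c < f' (f' c)) = false.
Proof. by move=> lt; rewrite f'K; apply/negbTE; rewrite -leqNgt ltnW. Qed.

Lemma hup j : j < size sT' -> h (nth d sT' j) =
  if j < #|T| then Some (nth a0 sT j)
  else if j - #|T| + #|I'| < #|I| then Some (nth a0 sI (j - #|T| + #|I'|)) else None.
Proof.
move=> js; have: nth d sT' j \in sT' by apply: mem_nth.
rewrite memT' => lt; rewrite /h up_ne // lt index_uniq // ?enum_uniq //.
Qed.

Lemma hdown j : j < size sT' -> h (f' (nth d sT' j)) =
  if j < #|T| then Some (f (nth a0 sT j)) else None.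
Proof.
move=> js; have: nth d sT' j \in sT' by apply: mem_nth.
rewrite memT' => lt; rewrite /h down1 // down2 // f'K index_uniq // ?enum_uniq //.
Qed.

Lemma hg a : h (g a) = Some a.
Proof.
rewrite /g; case: ifP => [fa|nfa].
  have ain : a \in sI by rewrite memI.
  have jlt : index a sI < #|I| by rewrite -szI index_mem.
  rewrite nth_cat szI'; case: ifP => [jI|jI].
    have cin : nth d sI' (index a sI) \in sI' by apply: mem_nth; rewrite szI'.
    move: (cin); rewrite memI' => fc.
    by rewrite /h fc index_uniq ?enum_uniq ?szI' // jlt nth_index.
  rewrite nth_drop hup; last by rewrite szT'; lia.
  rewrite ifF; last by lia.
  by rewrite ifT; [rewrite (_ : _ - _ + _ = index a sI) ?nth_index //|]; lia.
case: ifP => [up|nup].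
  have ain : a \in sT by rewrite memT.
  have jlt : index a sT < #|T| by rewrite -szT index_mem.
  by rewrite hup ?jlt ?nth_index // szT'; lia.
have dn : f a < a.
  move/negbT: nfa; move/negbT: nup => h1 h2.
  have h3 : (f a : nat) != a by []. lia.
have ain : f a \in sT by rewrite memT fK.
have jlt : index (f a) sT < #|T| by rewrite -szT index_mem.
by rewrite hdown ?jlt ?nth_index ?fK // szT'; lia.
Qed.

Lemma g_inj : injective g.
Proof. by move=> a b E; move: (hg a); rewrite E hg => -[]. Qed.

Lemma g_good a : f' (g a) = g (f a) \/ forall b, g b <> f' (g a).
Proof.
have bad : forall c, h c = None -> forall b, g b <> c.
  by move=> c hc b E; move: (hg b); rewrite E hc.
rewrite /g; case: ifP => [fa|nfa].
  have ain : a \in sI by rewrite memI.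
  have jlt : index a sI < #|I| by rewrite -szI index_mem.
  rewrite nth_cat szI'; case: ifP => [jI|jI].
    have cin : nth d sI' (index a sI) \in sI' by apply: mem_nth; rewrite szI'.
    move: (cin); rewrite memI' => /eqP fc.
    by left; rewrite fc (eqP fa) fa nth_cat szI' jI.
  right; apply: bad.
  rewrite nth_drop hdown; last by rewrite szT'; lia.
  by rewrite ifF //; lia.
case: ifP => [up|nup].
  have ain : a \in sT by rewrite memT.
  have jlt : index a sT < #|T| by rewrite -szT index_mem.
  left; rewrite fK.
  rewrite ifF; last by apply/negbTE; apply/eqP => E; rewrite -E ltnn in up.
  by rewrite ifF //; apply/negbTE; rewrite -leqNgt ltnW.
have dn : f a < a.
  move/negbT: nfa; move/negbT: nup => h1 h2.
  have h3 : (f a : nat) != a by []. lia.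
left; rewrite f'K fK.
rewrite ifF; last by apply/negbTE; apply/eqP => E; move: dn; rewrite -E ltnn.
by rewrite dn.
Qed.
End Constr.

Lemma map_reshape (A B : Type) (g : A -> B) sh s :
  map (map g) (reshape sh s) = reshape sh (map g s).
Proof. by elim: sh s => //= n sh IH s; rewrite map_take IH map_drop. Qed.

Lemma transfer (A B : eqType) (th : seq A -> seq A) (th' : seq B -> seq B)
  (f : A -> A) (f' : B -> B) (g : A -> B) k (x : nat -> A) :
  (forall w, th w = rev (map f w)) -> (forall w, th' w = rev (map f' w)) ->
  injective g ->
  (forall a, f' (g a) = g (f a) \/ forall b, g b <> f' (g a)) ->
  inf_pseudo_power_free th k x -> inf_pseudo_power_free th' k (g \o x).
Proof.
move=> Eth Eth' ig Hg Hx i len [ne [us [szus fl H]]].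
apply: (Hx i len).
have Ew : factor (g \o x) i len = map g (factor x i len) by rewrite /factor /mkseq -map_comp.
set w := factor x i len in Ew.
rewrite Ew in fl ne.
split; first by move=> E; apply: ne; rewrite /w E.
have szw : size w = sumn (shape us) by rewrite -size_flatten fl size_map.
exists (reshape (shape us) w); split.
- by rewrite size_reshape size_map.
- by rewrite reshapeKr // szw.
have Em : map (map g) (reshape (shape us) w) = us by rewrite map_reshape -fl flattenK.
have En : forall i, i < k -> map g (nth [::] (reshape (shape us) w) i) = nth [::] us i.
  move=> j jk; rewrite -[in RHS]Em (nth_map [::]) //; by rewrite size_reshape size_map szus.
move=> a b ak bk; have [E|E] := H a b ak bk.
  by left; apply: (inj_map ig); rewrite !En.
rewrite -(En a ak) -(En b bk) Eth' in E.
set vb := nth [::] _ b in E *; set va := nth [::] _ a in E *.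
have [allg | ] := boolP (all (fun c => f' (g c) == g (f c)) vb).
  right; rewrite Eth; apply: (inj_map ig).
  rewrite E map_rev -!map_comp; congr rev; apply/eq_in_map => c cin.
  by move/allP: allg => /(_ c cin) /eqP.
case/allPn => c cin /eqP ne'.
have [//|nb] := Hg c.
have : f' (g c) \in map g va by rewrite E mem_rev -map_comp; apply/mapP; exists c.
by case/mapP => d _ /esym; move/nb.
Qed.

Lemma letter (A : eqType) (th : seq A -> seq A) : antimorphic_involution th ->
  exists f : A -> A, involutive f /\ forall w, th w = rev (map f w).
Proof.
move=> [thc thK].
have th0 : th [::] = [::].
  have := thc [::] [::]; rewrite cat0s => E.
  by apply/eqP; rewrite -size_eq0; move/(congr1 size): E; rewrite size_cat; lia.
have s1 : forall a, 0 < size (th [:: a]).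
  move=> a; rewrite lt0n size_eq0; apply/eqP => E.
  by have := thK [:: a]; rewrite E th0.
have sge : forall w, size w <= size (th w).
  elim=> [|a w IH] //=; rewrite -cat1s thc size_cat; have := s1 a; lia.
have s1' : forall a, size (th [:: a]) = 1.
  move=> a; apply/eqP; rewrite eqn_leq s1 andbT.
  by have := sge (th [:: a]); rewrite thK.
pose f a := head a (th [:: a]).
have Ef : forall a, th [:: a] = [:: f a].
  by move=> a; rewrite /f; have := s1' a; case: (th [:: a]) => [|b [|]].
have Ew : forall w, th w = rev (map f w).
  elim=> [|a w IH] //=; rewrite -cat1s thc IH Ef rev_cons cats1 //.
exists f; split => // a.
have := thK [:: a]; rewrite Ef Ef => -[].
done.
Qed.

Theorem mainTheorem14 (k n m : nat)
  (th : seq 'I_n -> seq 'I_n) (th' : seq 'I_m -> seq 'I_m) :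
  2 <= k ->
  antimorphic_involution th -> antimorphic_involution th' ->
  #|Trn th| <= #|Trn th'| ->
  #|Idt th| + #|Trn th| <= #|Idt th'| + #|Trn th'| ->
  (exists x : nat -> 'I_n, inf_pseudo_power_free th k x) ->
  exists y : nat -> 'I_m, inf_pseudo_power_free th' k y.
Proof.
move=> k2 thA th'A hT hIT [x Hx].
have [f [fK Ef]] := letter thA.
have [f' [f'K Ef']] := letter th'A.
have EI : forall p (ph : 'I_p -> 'I_p) (tt : seq 'I_p -> seq 'I_p),
    (forall w, tt w = rev (map ph w)) -> Idt tt = I ph.
  by move=> p ph tt E; apply/setP => a; rewrite !inE E /= eqseq_cons andbT.
have ET : forall p (ph : 'I_p -> 'I_p) (tt : seq 'I_p -> seq 'I_p),
    (forall w, tt w = rev (map ph w)) -> Trn tt = T ph.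
  move=> p ph tt E; apply/setP => a; rewrite !inE E /=.
  apply/existsP/idP => [[b /andP[/eqP [->]] //]| lt].
  by exists (ph a); rewrite eqxx lt.
rewrite (EI _ _ _ Ef) (EI _ _ _ Ef') (ET _ _ _ Ef) (ET _ _ _ Ef') in hT hIT.
set a0 := x 0.
have pos : 0 < #|I f| + #|T f|.
  case: (boolP (f a0 == a0)) => [fa|nfa].
    suff : 0 < #|I f| by lia.
    by apply/card_gt0P; exists a0; rewrite inE.
  suff : 0 < #|T f| by lia.
  case: (boolP (a0 < f a0)) => [lt|nlt].
    by apply/card_gt0P; exists a0; rewrite inE.
  apply/card_gt0P; exists (f a0); rewrite inE fK.
  have h3 : (f a0 : nat) != a0 by []. lia.
have mpos : 0 < m.
  have : #|I f'| + #|T f'| <= m + m.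
    have := max_card (I f'); have := max_card (T f'); rewrite card_ord; lia.
  move=> hm; have := leq_trans pos (leq_trans hIT hm); lia.
pose d := Ordinal mpos.
exists (g f f' d \o x).
apply: (transfer Ef Ef' (@g_inj _ _ _ _ fK f'K a0 d hT hIT) (@g_good _ _ _ _ fK f'K a0 d hT hIT) Hx).
Qed.
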